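(* For every strongly binary $2$-matroid $Z$ there is a unique strongly binary $2$-sheltering matroid $Q$ such that $\mathcal Z(Q)=Z$.
   Context: Let $\Omega$ be a partition of a finite set $U$ into classes of size $2$. A subtransversal (transversal) meets every class in at most (exactly) one element. A transversal $2$-tuple is an ordered pair $\tau=(T_1,T_2)$ of disjoint transversals; each $t\in T_1$ corresponds to the unique $\bar t\in T_2$ with $\{t,\bar t\}\in\Omega$. For a $T_1\times T_2$ matrix $A$ over a field $\mathbb F$ that is skew-symmetric (i.e. $A_{s,\bar t}=-A_{t,\bar s}$ for all $s,t\in T_1$), $\mathcal Q(A,\tau,2)=(M,\Omega)$ where $M$ is the column matroid of $(I\mid A)$, rows indexed by $T_1$, identity columns indexed by $T_1$ and the columns of $A$ indexed by $T_2$; this is a $2$-sheltering matroid. A sheltering matroid is a pair $Q=(M,\Omega)$ with $M$ a matroid on $U$ such that for every independent subtransversal $I$ and every class $\{x,y\}$ disjoint from $I$, $I\cup\{x\}$ or $I\cup\{y\}$ is independent; $\mathcal Z(Q)$ denotes the multimatroid ($2$-matroid) on $(U,\Omega)$ whose independent sets are the independent subtransversals of $M$. A $2$-sheltering matroid $Q$ is strongly binary if $Q=\mathcal Q(A,\tau,2)$ for some transversal $2$-tuple $\tau$ and some skew-symmetric (equivalently, symmetric) matrix $A$ over $GF(2)$; a $2$-matroid $Z$ is strongly binary if $Z=\mathcal Z(Q)$ for some strongly binary $2$-sheltering matroid $Q$. Equality of sheltering matroids means equality of the matroids on $U$ together with the same partition $\Omega$. *)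

(* Defs.v *)
From HB Require Import structures.
From mathcomp Require Import all_boot all_order all_algebra.
Set Implicit Arguments. Unset Strict Implicit. Unset Printing Implicit Defensive.
Import GRing.Theory.
Local Open Scope ring_scope.

Section Defs.
Variable U : finType.

Definition is_2partition (Omega : {set {set U}}) : Prop :=
  partition Omega [set: U] /\ (forall w, w \in Omega -> #|w| = 2%N).

Definition subtransversal (Omega : {set {set U}}) (T : {set U}) : bool :=
  [forall w in Omega, #|T :&: w| <= 1]%N.

Definition transversal (Omega : {set {set U}}) (T : {set U}) : bool :=
  [forall w in Omega, #|T :&: w| == 1]%N.

Definition transversal_2tuple (Omega : {set {set U}}) (T1 T2 : {set U}) : bool :=
  [&& transversal Omega T1, transversal Omega T2 & [disjoint T1 & T2]].

Definition same_class (Omega : {set {set U}}) (x y : U) : bool :=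
  [exists w in Omega, (x \in w) && (y \in w)].

(* A : T1 x T2 matrix (entries outside T1 x T2 are irrelevant);
   skew-symmetric: A_{s, tbar} = - A_{t, sbar} for s, t in T1. *)
Definition skew_symmetric (R : pzRingType) (Omega : {set {set U}})
    (T1 T2 : {set U}) (A : U -> U -> R) : Prop :=
  forall s t s' t', s \in T1 -> t \in T1 -> s' \in T2 -> t' \in T2 ->
    same_class Omega s s' -> same_class Omega t t' -> A s t' = - A t s'.

(* Column of (I | A) indexed by u, as a vector indexed by rows T1. *)
Definition col_IA (R : pzRingType) (T1 : {set U}) (A : U -> U -> R) (u : U)
    : U -> R :=
  fun s => if s \in T1 then (if u \in T1 then (s == u)%:R else A s u) else 0.

Definition lin_indep (R : pzRingType) (v : U -> U -> R) (X : {set U}) : Prop :=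
  forall c : U -> R,
    (forall s, \sum_(u in X) c u * v u s = 0) -> forall u, u \in X -> c u = 0.

Definition is_matroid (M : {set {set U}}) : Prop :=
  [/\ set0 \in M,
      (forall X Y : {set U}, Y \in M -> X \subset Y -> X \in M) &
      (forall X Y : {set U}, X \in M -> Y \in M -> (#|X| < #|Y|)%N ->
         exists2 y, y \in Y :\: X & y |: X \in M)].

Definition is_sheltering (Omega : {set {set U}}) (M : {set {set U}}) : Prop :=
  is_matroid M /\
  forall (I : {set U}) (x y : U), I \in M -> subtransversal Omega I ->
    x != y -> [set x; y] \in Omega -> [disjoint I & [set x; y]] ->
    (x |: I \in M) \/ (y |: I \in M).

Definition Zof (Omega : {set {set U}}) (M : {set {set U}}) : {set {set U}} :=
  [set X in M | subtransversal Omega X].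

Definition GF2 := 'F_2.

Definition strongly_binary_shelter (Omega : {set {set U}}) (M : {set {set U}})
    : Prop :=
  is_sheltering Omega M /\
  exists T1 T2 : {set U}, exists A : U -> U -> GF2,
    [/\ transversal_2tuple Omega T1 T2, skew_symmetric Omega T1 T2 A &
        forall X : {set U}, X \in M <-> lin_indep (col_IA T1 A) X].

Definition strongly_binary_2matroid (Omega : {set {set U}}) (Z : {set {set U}})
    : Prop :=
  exists M, strongly_binary_shelter Omega M /\ Zof Omega M = Z.

End Defs.

(* Main.v *)
Require Import Defs.
From mathcomp Require Import all_boot all_order all_algebra.
From Stdlib Require Import ClassicalEpsilon.
Set Implicit Arguments. Unset Strict Implicit. Unset Printing Implicit Defensive.
Import GRing.Theory.
Local Open Scope ring_scope.

Lemma F2cases (x : GF2) : x = 0 \/ x = 1.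
Proof. case: x => [[|[|n]]] Hx; [left|right|]; try exact: val_inj. by []. Qed.

Lemma F2_11 : (1 + 1 : GF2) = 0. Proof. exact: val_inj. Qed.
Lemma F2_10 : (1 : GF2) != 0. Proof. by []. Qed.
Lemma F2_opp (x : GF2) : - x = x.
Proof. case: (F2cases x) => ->; rewrite ?oppr0 //. by apply/eqP; rewrite eq_sym -subr_eq0 opprK F2_11. Qed.

Definition P1 (a : GF2) := forall c : GF2, c * a = 0 -> c = 0.
Definition P2 (a b d : GF2) := forall c1 c2 : GF2,
  c1 * a + c2 * b = 0 -> c1 * b + c2 * d = 0 -> c1 = 0 /\ c2 = 0.

Ltac f2simp := rewrite ?(mul0r, mulr0, mul1r, mulr1, addr0, add0r, F2_11) /=.

Lemma P1_eq a a' : (P1 a <-> P1 a') -> a = a'.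
Proof.
have P10 : ~ P1 0 by move=> H; have := H 1; f2simp; move=> /(_ erefl) /eqP; rewrite oner_eq0.
have P11 : P1 1 by move=> c; f2simp.
by case: (F2cases a) => ->; case: (F2cases a') => -> // [] H1 H2; exfalso; auto.
Qed.

Lemma P2_char a b d : P2 a b d <-> (a * d + b != 0).
Proof.
have h10 : (1:GF2) = 0 -> False by move/eqP; rewrite oner_eq0.
split.
- move=> H; apply/negP => /eqP Hd; move: Hd H.
  case: (F2cases a) => ->; case: (F2cases b) => ->; case: (F2cases d) => ->; f2simp;
  try (move=> /h10 //);
  move=> _ H;
  first [ have [] := H 1 0; f2simp; by auto | have [] := H 0 1; f2simp; by auto | have [] := H 1 1; f2simp; by auto ].
- case: (F2cases a) => ->; case: (F2cases b) => ->; case: (F2cases d) => ->; f2simp;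
  rewrite ?eqxx //= => _ c1 c2;
  case: (F2cases c1) => ->; case: (F2cases c2) => ->; f2simp; auto.
Qed.

Lemma P2_eq a b b' d : (P2 a b d <-> P2 a b' d) -> b = b'.
Proof.
move=> [H1 H2].
have : (a * d + b != 0) = (a * d + b' != 0).
  by apply/idP/idP => /P2_char H; apply/P2_char; auto.
case: (F2cases a) => ->; case: (F2cases b) => ->; case: (F2cases b') => ->;
  case: (F2cases d) => ->; f2simp; rewrite ?eqxx ?F2_10 //=.
Qed.

Section Bar.
Variable U : finType.
Variable Omega : {set {set U}}.
Hypothesis HO : is_2partition Omega.

Lemma cov x : x \in cover Omega.
Proof. by case: HO => /and3P [/eqP -> _ _] _; rewrite inE. Qed.
Lemma triv : trivIset Omega.
Proof. by case: HO => /and3P [_ ? _] _. Qed.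

Lemma pb_mem x : pblock Omega x \in Omega.
Proof. exact: pblock_mem (cov x). Qed.
Lemma pb_in x : x \in pblock Omega x.
Proof. by rewrite mem_pblock cov. Qed.

Lemma scP x y : same_class Omega x y = (y \in pblock Omega x).
Proof.
apply/existsP/idP.
- by case=> w /and3P [wO xw yw]; rewrite (def_pblock triv wO xw).
- by move=> yb; exists (pblock Omega x); rewrite pb_mem pb_in yb.
Qed.

Lemma sc_sym x y : same_class Omega x y = same_class Omega y x.
Proof. by apply/existsP/existsP => -[w /and3P [? ? ?]]; exists w; apply/and3P. Qed.

Definition bar x := odflt x [pick y | (y != x) && same_class Omega x y].

Lemma pbD1 x : exists z, pblock Omega x :\ x = [set z].
Proof.
apply/cards1P; have := HO.2 _ (pb_mem x).
by rewrite (cardsD1 x) pb_in add1n => -[->].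
Qed.

Lemma bar_spec x : (bar x != x) && same_class Omega x (bar x).
Proof.
rewrite /bar; case: pickP => [y -> //|H].
have [z Hz] := pbD1 x.
have : z \in pblock Omega x :\ x by rewrite Hz set11.
by rewrite !inE => /andP [zx zb]; have := H z; rewrite zx scP zb.
Qed.

Lemma bar_neq x : bar x != x.
Proof. by case/andP: (bar_spec x). Qed.
Lemma bar_sc x : same_class Omega x (bar x).
Proof. by case/andP: (bar_spec x). Qed.

Lemma bar_uniq x y : same_class Omega x y -> y != x -> y = bar x.
Proof.
have [z Hz] := pbD1 x.
have H : forall w, same_class Omega x w -> w != x -> w = z.
  by move=> w; rewrite scP => wb wx; apply/set1P; rewrite -Hz !inE wx.
by move=> sxy yx; rewrite (H _ sxy yx) (H _ (bar_sc x) (bar_neq x)).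
Qed.

Lemma barK x : bar (bar x) = x.
Proof.
by symmetry; apply: bar_uniq; [rewrite sc_sym; exact: bar_sc | rewrite eq_sym bar_neq].
Qed.

Lemma bar_inj : injective bar.
Proof. exact: can_inj barK. Qed.

Lemma sc_cases x y : same_class Omega x y -> y = x \/ y = bar x.
Proof. by move=> sxy; case: (eqVneq y x) => [->|yx]; [left|right; exact: bar_uniq]. Qed.

Lemma tr1 T w : Defs.transversal Omega T -> w \in Omega -> #|T :&: w| = 1%N.
Proof. by move=> /forall_inP H wO; apply/eqP; exact: H. Qed.

Lemma tr_bar_out T x : Defs.transversal Omega T -> x \in T -> bar x \notin T.
Proof.
move=> HT xT; apply/negP => bT.
have /cards1P [z Hz] : #|T :&: pblock Omega x| == 1%N by rewrite (tr1 HT (pb_mem x)).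
have : x \in T :&: pblock Omega x by rewrite inE xT pb_in.
have : bar x \in T :&: pblock Omega x by rewrite inE bT -scP bar_sc.
rewrite Hz => /set1P bz /set1P xz.
by move: (bar_neq x); rewrite bz xz eqxx.
Qed.

Lemma tr_bar_in T x : Defs.transversal Omega T -> x \notin T -> bar x \in T.
Proof.
move=> HT xT.
have /cards1P [z Hz] : #|T :&: pblock Omega x| == 1%N by rewrite (tr1 HT (pb_mem x)).
have : z \in T :&: pblock Omega x by rewrite Hz set11.
rewrite inE -scP => /andP [zT sxz].
have zx : z != x by apply: contraNneq xT => <-.
by rewrite -(bar_uniq sxz zx).
Qed.

Lemma tup_notin T1 T2 x : transversal_2tuple Omega T1 T2 -> (x \in T2) = (x \notin T1).
Proof.
case/and3P => H1 H2 Hd; apply/idP/idP.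
- by move=> x2; apply/negP => x1; rewrite (disjointFr Hd x1) in x2.
- move=> x1; have b1 := tr_bar_in H1 x1.
  have b2 : bar x \notin T2 by rewrite (disjointFr Hd b1).
  by have := tr_bar_in H2 b2; rewrite barK.
Qed.

Lemma tup_bar T1 T2 x : transversal_2tuple Omega T1 T2 -> x \in T1 -> bar x \in T2.
Proof. move=> H x1; rewrite (tup_notin _ H); case/and3P: H => H1 _ _; exact: tr_bar_out. Qed.

End Bar.

Section Lin.
Variable U : finType.
Variable Omega : {set {set U}}.
Hypothesis HO : is_2partition Omega.
Notation bar := (bar Omega).

Lemma barT T1 T2 y : transversal_2tuple Omega T1 T2 -> (bar y \notin T1) = (y \in T1).
Proof.
move=> H; case/and3P: (H) => H1 _ _; apply/idP/idP.
- by apply: contraR => yT; rewrite ?negbK; exact: tr_bar_in.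
- exact: tr_bar_out.
Qed.

Lemma reidx T1 T2 (F : U -> GF2) : transversal_2tuple Omega T1 T2 ->
  \sum_(x | x \notin T1) F x = \sum_(y in T1) F (bar y).
Proof.
move=> H; rewrite (reindex_inj (bar_inj HO)); apply: eq_bigl => y.
by rewrite (barT y H).
Qed.

Definition inker (v : U -> U -> GF2) (c : U -> GF2) := forall s, \sum_x c x * v x s = 0.

Lemma ker_eq T1 T2 (A : U -> U -> GF2) c r : transversal_2tuple Omega T1 T2 -> inker (col_IA T1 A) c ->
  r \in T1 -> c r = - \sum_(y in T1) c (bar y) * A r (bar y).
Proof.
move=> H Hc rT; apply/eqP; rewrite -subr_eq0 opprK; apply/eqP.
have := Hc r; rewrite (bigID (mem T1)) /= (bigD1 r) //= big1 ?addr0; last first.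
  by move=> x /andP [xT xr]; rewrite /col_IA rT xT eq_sym (negbTE xr) mulr0.
rewrite /col_IA rT eqxx mulr1 (reidx _ H) => E; apply: etrans E; congr (_ + _).
apply: eq_bigr => y yT; by have := barT y H; rewrite yT => /negbTE ->.
Qed.

Lemma skewb T1 T2 (A : U -> U -> GF2) s t : transversal_2tuple Omega T1 T2 -> skew_symmetric Omega T1 T2 A ->
  s \in T1 -> t \in T1 -> A s (bar t) = - A t (bar s).
Proof.
move=> H Hs sT tT; apply: Hs => //; try exact: tup_bar H _; exact: bar_sc.
Qed.

Lemma omega0 T1 T2 (A : U -> U -> GF2) c d : transversal_2tuple Omega T1 T2 -> skew_symmetric Omega T1 T2 A ->
  inker (col_IA T1 A) c -> inker (col_IA T1 A) d -> \sum_x c x * d (bar x) = 0.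
Proof.
move=> H Hs Hc Hd.
have E1 : \sum_(x in T1) c x * d (bar x) =
   - \sum_(x in T1) \sum_(y in T1) c (bar y) * A x (bar y) * d (bar x).
  rewrite -sumrN; apply: eq_bigr => x xT; by rewrite (ker_eq H Hc xT) mulNr mulr_suml.
have E2 : \sum_(y in T1) c (bar y) * d y =
   \sum_(x in T1) \sum_(y in T1) c (bar y) * A x (bar y) * d (bar x).
  rewrite exchange_big; apply: eq_bigr => y yT; rewrite (ker_eq H Hd yT) -sumrN mulr_sumr.
  apply: eq_bigr => x xT; rewrite (skewb H Hs yT xT) !mulrN opprK.
  by rewrite [d _ * _]mulrC mulrA.

rewrite (bigID (mem T1)) /= (reidx _ H).
have E3 : \sum_(y in T1) c (bar y) * d (bar (bar y)) = \sum_(y in T1) c (bar y) * d y.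
  by apply: eq_bigr => y _; rewrite barK.
rewrite E3.
by rewrite E1 E2 addNr.
Qed.

Lemma indepT (T1 : {set U}) (A : U -> U -> GF2) : lin_indep (col_IA T1 A) T1.
Proof.
move=> c Hc u uT; have := Hc u; rewrite (bigD1 u) //= big1 ?addr0.
  by rewrite /col_IA uT eqxx mulr1.
by move=> x /andP [xT xu]; rewrite /col_IA uT xT eq_sym (negbTE xu) mulr0.
Qed.

Lemma cardT T : Defs.transversal Omega T -> #|T| = #|Omega|.
Proof.
move=> HT; rewrite -(@card_in_imset _ _ (pblock Omega) T).
  suff -> : pblock Omega @: T = Omega by [].
  apply/setP => w; apply/imsetP/idP.
  - by case=> x _ ->; exact: pb_mem.
  - move=> wO; have /cards1P [z Hz] : #|T :&: w| == 1%N by rewrite (tr1 HT wO).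
    have : z \in T :&: w by rewrite Hz set11.
    by rewrite inE => /andP [zT zw]; exists z => //; rewrite (def_pblock (triv HO) wO zw).
move=> x y xT yT E.
have /cards1P [z Hz] : #|T :&: pblock Omega x| == 1%N by rewrite (tr1 HT (pb_mem HO x)).
have : x \in T :&: pblock Omega x by rewrite inE xT pb_in.
have : y \in T :&: pblock Omega x by rewrite inE yT E pb_in.
by rewrite Hz => /set1P -> /set1P ->.
Qed.

Lemma span T1 T2 T1' T2' (A' : U -> U -> GF2) u :
  transversal_2tuple Omega T1 T2 -> transversal_2tuple Omega T1' T2' ->
  lin_indep (col_IA T1' A') T1 ->
  exists b : U -> GF2, (forall r, r \notin T1 -> b r = 0) /\
     forall x, col_IA T1' A' u x = \sum_(r in T1) b r * col_IA T1' A' r x.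
Proof.
move=> H H' Hi.
set v := col_IA T1' A'.
pose S := {x : U | x \in T1}. pose S' := {x : U | x \in T1'}.
pose lift (b : {ffun S -> GF2}) (x : U) : GF2 := if insub x is Some r then b r else 0.
have liftO b x : x \notin T1 -> lift b x = 0 by move=> xT; rewrite /lift insubF //; exact: negbTE.
have liftV b (r : S) : lift b (val r) = b r by rewrite /lift valK.
have v0 r x : x \notin T1' -> v r x = 0 by move=> xT; rewrite /v /col_IA (negbTE xT).
pose phi (b : {ffun S -> GF2}) : {ffun S' -> GF2} :=
  [ffun y : S' => \sum_(r in T1) lift b r * v r (val y)].
have inj : injective phi.
  move=> b1 b2 E; apply/ffunP => r.
  have key : forall s, \sum_(x in T1) (lift b1 x - lift b2 x) * v x s = 0.
    move=> s; case: (boolP (s \in T1')) => sT.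
    - have := congr1 (fun f : {ffun S' -> GF2} => f (exist _ s sT)) E; rewrite !ffunE /= => e.
      under eq_bigr do rewrite mulrBl.
      by rewrite sumrB e subrr.
    - by apply: big1 => x _; rewrite v0 // mulr0.
  have := Hi _ key (val r) (valP r); rewrite !liftV => /eqP; rewrite subr_eq0 => /eqP.
  exact.
have card : (#|{ffun S' -> GF2}| <= #|{ffun S -> GF2}|)%N.
  rewrite !card_ffun !card_sig.
  have -> : #|[pred x | x \in T1]| = #|T1| by apply: eq_card.
  have -> : #|[pred x | x \in T1']| = #|T1'| by apply: eq_card.
  case/and3P: H => H1 _ _; case/and3P: H' => H1' _ _.
  by rewrite (cardT H1) (cardT H1').
have [psi phiK psiK] := inj_card_bij inj card.
pose y := [ffun s : S' => v u (val s)].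
exists (lift (psi y)); split; first by move=> r rT; exact: liftO.
move=> x; case: (boolP (x \in T1')) => xT.
- have := congr1 (fun f : {ffun S' -> GF2} => f (exist _ x xT)) (psiK y).
  by rewrite /phi /y !ffunE /=.
- by rewrite v0 //; symmetry; apply: big1 => r _; rewrite v0 // mulr0.
Qed.

Lemma subtr (Y : {set U}) : (forall x, x \in Y -> bar x \notin Y) -> subtransversal Omega Y.
Proof.
move=> HY; apply/forall_inP => w wO; apply/card_le1_eqP => x y.
rewrite !inE => /andP [xY xw] /andP [yY yw].
have sxy : same_class Omega x y by apply/existsP; exists w; rewrite wO xw yw.
case: (sc_cases HO sxy) => // yb.
by move: (HY _ xY); rewrite -yb yY.
Qed.

Lemma splitZ (T X Y : {set U}) (F : U -> GF2) : (forall y, y \in Y -> y \notin T) ->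
  \sum_(u in (T :\: X) :|: Y) F u = \sum_(u in T :\: X) F u + \sum_(u in Y) F u.
Proof.
move=> HY; rewrite (bigID (mem Y)) /= addrC; congr (_ + _); apply: eq_bigl => u.
- rewrite !inE; case: (boolP (u \in Y)) => uY; rewrite ?orbT ?orbF ?andbT ?andbF //=.
  by rewrite (negbTE (HY _ uY)) andbF.
- by rewrite !inE; case: (u \in Y); rewrite ?orbT ?andbT ?andbF.
Qed.

Lemma colsum (T X Y : {set U}) (C : U -> U -> GF2) c s : (forall y, y \in Y -> y \notin T) ->
  s \in T ->
  \sum_(u in (T :\: X) :|: Y) c u * col_IA T C u s =
  (if s \in T :\: X then c s else 0) + \sum_(u in Y) c u * C s u.
Proof.
move=> HY sT; rewrite splitZ //; congr (_ + _).
- case: ifP => sTX.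
  + rewrite (bigD1 s) //= big1 ?addr0; first by rewrite /col_IA sT eqxx mulr1.
    move=> u /andP [uTX us]; rewrite /col_IA sT.
    by move: uTX; rewrite inE => /andP [_ ->]; rewrite eq_sym (negbTE us) mulr0.
  + apply: big1 => u uTX; rewrite /col_IA sT.
    have uT : u \in T by move: uTX; rewrite inE => /andP [].
    by rewrite uT; case: eqP => [eus|]; [rewrite -eus sTX in uTX | rewrite mulr0].
- by apply: eq_bigr => u uY; rewrite /col_IA sT (negbTE (HY _ uY)).
Qed.

Lemma indep_sub (T X Y : {set U}) (C : U -> U -> GF2) :
  X \subset T -> (forall y, y \in Y -> y \notin T) ->
  lin_indep (col_IA T C) ((T :\: X) :|: Y) <->
  (forall c : U -> GF2, (forall r, r \in X -> \sum_(u in Y) c u * C r u = 0) ->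
      forall u, u \in Y -> c u = 0).
Proof.
move=> XT HY; have colO u s : s \notin T -> col_IA T C u s = 0.
  by move=> sT; rewrite /col_IA (negbTE sT).
split.
- move=> Hi c Hc u uY.
  pose c' x := if x \in Y then c x else - \sum_(v in Y) c v * C x v.
  have K : forall s, \sum_(v in (T :\: X) :|: Y) c' v * col_IA T C v s = 0.
    move=> s; case: (boolP (s \in T)) => sT; last first.
      by apply: big1 => v _; rewrite colO // mulr0.
    rewrite colsum //.
    have -> : \sum_(v in Y) c' v * C s v = \sum_(v in Y) c v * C s v.
      by apply: eq_bigr => v vY; rewrite /c' vY.
    case: ifP => sTX.
    + rewrite /c' (negbTE (contraL (HY s) _)) ?negbK // addNr //.
    + rewrite add0r; apply: Hc; move: sTX; rewrite inE sT andbT => /negbFE.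
      exact.
  have := Hi _ K u; rewrite /c' uY; apply; by rewrite inE uY orbT.
- move=> P c Hc.
  have cY : forall u, u \in Y -> c u = 0.
    apply: P => r rX; have rT : r \in T by exact: (subsetP XT).
    by have := Hc r; rewrite colsum // inE rX /= add0r.
  move=> u; rewrite inE => /orP [uTX|]; last exact: cY.
  have uT : u \in T by move: uTX; rewrite inE => /andP [].
  have := Hc u; rewrite colsum // uTX big1 ?addr0 //.
  by move=> v vY; rewrite cY // mul0r.
Qed.

Lemma rebase (v w : U -> U -> GF2) (T1 : {set U}) :
  lin_indep v T1 -> (forall u r, r \notin T1 -> w u r = 0) ->
  (forall u x, v u x = \sum_(r in T1) w u r * v r x) ->
  forall X, lin_indep v X <-> lin_indep w X.
Proof.
move=> Hi Hw Hv X.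
have key : forall (c : U -> GF2) x, \sum_(u in X) c u * v u x =
    \sum_(r in T1) (\sum_(u in X) c u * w u r) * v r x.
  move=> c x; under eq_bigr do rewrite Hv mulr_sumr.
  rewrite exchange_big; apply: eq_bigr => r _; rewrite mulr_suml.
  by apply: eq_bigr => u _; rewrite mulrA.
split.
- move=> HX c Hc; apply: HX => x; rewrite key; apply: big1 => r _.
  by rewrite Hc mul0r.
- move=> HX c Hc; apply: HX => r.
  case: (boolP (r \in T1)) => rT; last first.
    by apply: big1 => u _; rewrite Hw // mulr0.
  apply: (Hi (fun r => \sum_(u in X) c u * w u r)) => // x.
  by rewrite -key.
Qed.

Lemma symB T1 T2 T1' T2' (A' B : U -> U -> GF2) s t :
  transversal_2tuple Omega T1 T2 -> transversal_2tuple Omega T1' T2' ->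
  skew_symmetric Omega T1' T2' A' ->
  (forall u, u \notin T1 -> forall x,
     col_IA T1' A' u x = \sum_(r in T1) B r u * col_IA T1' A' r x) ->
  s \in T1 -> t \in T1 -> B s (bar t) = - B t (bar s).
Proof.
move=> H H' Hs' HB sT tT.
pose g := fun u x : U => if x == u then (1 : GF2) else if x \in T1 then - B x u else 0.
have gk : forall u, u \notin T1 -> inker (col_IA T1' A') (g u).
  move=> u uT s0; rewrite (bigID (mem T1)) /=.
  have E : \sum_(x | x \notin T1) g u x * col_IA T1' A' x s0 = col_IA T1' A' u s0.
    rewrite (bigD1 u) //= big1 ?addr0; first by rewrite /g eqxx mul1r.
    by move=> x /andP [xT xu]; rewrite /g (negbTE xu) (negbTE xT) mul0r.
  have E2 : \sum_(x in T1) g u x * col_IA T1' A' x s0 =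
      - \sum_(x in T1) B x u * col_IA T1' A' x s0.
    rewrite -sumrN; apply: eq_bigr => x xT.
    rewrite /g; have -> : (x == u) = false by apply/negbTE; apply: contraNneq uT => <-.
    by rewrite xT mulNr.
  by rewrite E E2 (HB u uT s0) addNr.
have bsT : bar s \notin T1 by rewrite (barT s H).
have btT : bar t \notin T1 by rewrite (barT t H).
have := omega0 H' Hs' (gk _ btT) (gk _ bsT).
have sbt : s != bar t by apply: contraNneq btT => <-.
rewrite (bigD1 (bar t)) //= (bigD1 s) /=; last by rewrite sbt.
rewrite big1 ?addr0; last first.
  move=> x /andP [xbt xs]; rewrite /g (negbTE xbt).
  case: (boolP (x \in T1)) => xT; last by rewrite mul0r.
  have -> : (bar x == bar s) = false by apply/negbTE; apply: contra xs => /eqP /(bar_inj HO) ->.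
  have H1 : Defs.transversal Omega T1 by case/and3P: H.
  by rewrite (negbTE (tr_bar_out HO H1 xT)) mulr0.
rewrite (barK HO) /g /= !eqxx mul1r mulr1.
have tbs : t != bar s by apply: contraNneq bsT => <-.
rewrite (negbTE tbs) tT (negbTE sbt) sT => /eqP; rewrite addrC -opprD oppr_eq0 addr_eq0 => /eqP.
done.
Qed.

Lemma Q1 (C : U -> U -> GF2) s :
  (forall c : U -> GF2, (forall r, r \in [set s] -> \sum_(u in [set bar s]) c u * C r u = 0) ->
      forall u, u \in [set bar s] -> c u = 0) <-> P1 (C s (bar s)).
Proof.
split.
- move=> H c0 hc0; apply: (H (fun _ => c0)) (set11 _) => r /set1P ->.
  by rewrite big_set1.
- move=> H c hc u /set1P ->; apply: H; have := hc s (set11 _); by rewrite big_set1.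
Qed.

Lemma Q2 (C : U -> U -> GF2) s t : s != t -> C t (bar s) = C s (bar t) ->
  (forall c : U -> GF2, (forall r, r \in [set s; t] ->
        \sum_(u in [set bar s; bar t]) c u * C r u = 0) ->
      forall u, u \in [set bar s; bar t] -> c u = 0) <->
  P2 (C s (bar s)) (C s (bar t)) (C t (bar t)).
Proof.
move=> st Cst.
have bst : bar s != bar t by apply: contra st => /eqP /(bar_inj HO) ->.
have E : forall c : U -> GF2, forall r,
    \sum_(u in [set bar s; bar t]) c u * C r u = c (bar s) * C r (bar s) + c (bar t) * C r (bar t).
  by move=> c r; rewrite big_setU1 ?inE // big_set1.
split.
- move=> H c1 c2 e1 e2.
  pose c := fun x => if x == bar s then c1 else c2.
  have hc : forall r, r \in [set s; t] -> \sum_(u in [set bar s; bar t]) c u * C r u = 0.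
    move=> r; rewrite !inE => /orP [] /eqP ->; rewrite E /c eqxx eq_sym (negbTE bst) //.
    by rewrite Cst.
  have := H c hc (bar s); rewrite /c eqxx => ->; last by rewrite !inE eqxx.
  have := H c hc (bar t); rewrite /c eq_sym (negbTE bst) => ->; last by rewrite !inE eqxx orbT.
  by [].
- move=> H c hc.
  have e1 := hc s; rewrite E !inE eqxx in e1.
  have e2 := hc t; rewrite E !inE eqxx orbT Cst in e2.
  have [h1 h2] := H _ _ (e1 isT) (e2 isT).
  by move=> u; rewrite !inE => /orP [] /eqP ->.
Qed.

Lemma lin_indep_ext (v w : U -> U -> GF2) X : (forall u s, v u s = w u s) ->
  lin_indep v X <-> lin_indep w X.
Proof.
move=> E; split=> H c Hc; apply: H => s; rewrite -[RHS](Hc s); apply: eq_bigr => u _; by rewrite E.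
Qed.

Lemma core T1 T2 T1' T2' (A A' : U -> U -> GF2) :
  transversal_2tuple Omega T1 T2 -> skew_symmetric Omega T1 T2 A ->
  transversal_2tuple Omega T1' T2' -> skew_symmetric Omega T1' T2' A' ->
  (forall Y : {set U}, subtransversal Omega Y ->
     (lin_indep (col_IA T1 A) Y <-> lin_indep (col_IA T1' A') Y)) ->
  forall X, lin_indep (col_IA T1 A) X <-> lin_indep (col_IA T1' A') X.
Proof.
move=> H Hs H' Hs' HZ.
have H1 : Defs.transversal Omega T1 by case/and3P: H.
have sT1 : subtransversal Omega T1.
  by apply: subtr => x xT; exact (tr_bar_out HO H1 xT).
have Hi : lin_indep (col_IA T1' A') T1 by apply/(HZ _ sT1); exact: indepT.
have hs := fun u => span u H H' Hi.
pose bf u := proj1_sig (constructive_indefinite_description _ (hs u)).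
have bfP : forall u, (forall r, r \notin T1 -> bf u r = 0) /\
     forall x, col_IA T1' A' u x = \sum_(r in T1) bf u r * col_IA T1' A' r x.
  by move=> u; exact: (proj2_sig (constructive_indefinite_description _ (hs u))).
pose B s u := bf u s.
have HB : forall u, u \notin T1 -> forall x,
    col_IA T1' A' u x = \sum_(r in T1) B r u * col_IA T1' A' r x.
  by move=> u _; exact: (bfP u).2.
have Hreb : forall X, lin_indep (col_IA T1' A') X <-> lin_indep (col_IA T1 B) X.
  apply: rebase Hi _ _.
  - by move=> u r rT; rewrite /col_IA (negbTE rT).
  - move=> u x; case: (boolP (u \in T1)) => uT.
    + rewrite (bigD1 u) //= big1 ?addr0; first by rewrite /col_IA uT eqxx mul1r.
      by move=> r /andP [rT ru]; rewrite /col_IA rT uT (negbTE ru) mul0r.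
    + by rewrite HB //; apply: eq_bigr => r rT; rewrite /col_IA rT (negbTE uT).
have symm : forall s t, s \in T1 -> t \in T1 -> B t (bar s) = B s (bar t).
  by move=> s t sT tT; rewrite (symB H H' Hs' HB sT tT) F2_opp.
have symA : forall s t, s \in T1 -> t \in T1 -> A t (bar s) = A s (bar t).
  by move=> s t sT tT; rewrite (skewb H Hs sT tT) F2_opp.
have Heq : forall Y, subtransversal Omega Y ->
    lin_indep (col_IA T1 A) Y <-> lin_indep (col_IA T1 B) Y.
  by move=> Y sY; have := HZ Y sY; have := Hreb Y; tauto.
have barO : forall x, x \in T1 -> bar x \notin T1 by move=> x xT; exact (tr_bar_out HO H1 xT).
have diag : forall s, s \in T1 -> A s (bar s) = B s (bar s).
  move=> s sT; apply: P1_eq.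
  have sY : subtransversal Omega ((T1 :\: [set s]) :|: [set bar s]).
    apply: subtr => x; rewrite !inE => /orP [/andP [xs xT]|/eqP ->].
    + rewrite (negbTE (barO _ xT)) andbF /=; apply: contra xs => /eqP /(bar_inj HO) ->.
      by [].
    + by rewrite (barK HO) eqxx /= eq_sym (negbTE (bar_neq HO s)).
  have HYT : forall y, y \in [set bar s] -> y \notin T1 by move=> y /set1P ->; exact: barO.
  have sub1 : [set s] \subset T1 by rewrite sub1set.
  have e1 := indep_sub A sub1 HYT; have e2 := indep_sub B sub1 HYT.
  have e3 := Q1 A s; have e4 := Q1 B s; have e5 := Heq _ sY.
  tauto.
have offd : forall s t, s \in T1 -> t \in T1 -> s != t -> A s (bar t) = B s (bar t).
  move=> s t sT tT st; apply: (@P2_eq (A s (bar s)) _ _ (A t (bar t))).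
  have sY : subtransversal Omega ((T1 :\: [set s; t]) :|: [set bar s; bar t]).
    apply: subtr => x; rewrite !inE => /orP [/andP [xst xT]|/orP [] /eqP ->].
    + rewrite (negbTE (barO _ xT)) andbF /=.
      apply/negP => /orP [] /eqP /(bar_inj HO) e; by rewrite e eqxx ?orbT in xst.
    + rewrite (barK HO) eqxx /= !(eq_sym s).
      have -> : (bar t == s) = false by apply/negbTE; apply: contraNneq (barO _ tT) => ->; exact sT.
      by rewrite (negbTE (bar_neq HO s)).
    + rewrite (barK HO) eqxx orbT /=.
      have -> : (t == bar s) = false by apply/negbTE; apply: contraNneq (barO _ sT) => <-; exact tT.
      by rewrite /= eq_sym (negbTE (bar_neq HO t)).

  have HYT : forall y, y \in [set bar s; bar t] -> y \notin T1.
    by move=> y; rewrite !inE => /orP [] /eqP ->; exact: barO.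
  have sub2 : [set s; t] \subset T1 by apply/subsetP => y; rewrite !inE => /orP [] /eqP ->.
  have e1 := indep_sub A sub2 HYT; have e2 := indep_sub B sub2 HYT.
  have e3 := Q2 st (symA _ _ sT tT); have e4 := Q2 st (symm _ _ sT tT).
  rewrite -!diag // in e4.
  have e5 := Heq _ sY.
  tauto.
have colE : forall u x, col_IA T1 A u x = col_IA T1 B u x.
  move=> u x; rewrite /col_IA; case: (boolP (x \in T1)) => xT //.
  case: (boolP (u \in T1)) => uT //.
  have tT := tr_bar_in HO H1 uT; rewrite -[u](barK HO).
  case: (eqVneq x (bar u)) => [<-|xt]; first exact: diag.
  exact: offd.
move=> X; have := Hreb X; have := lin_indep_ext X colE; tauto.
Qed.

End Lin.

Theorem proposition2p13 (U : finType) (Omega : {set {set U}})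
    (HOmega : is_2partition Omega) (Z : {set {set U}}) :
  strongly_binary_2matroid Omega Z ->
  exists! M : {set {set U}}, strongly_binary_shelter Omega M /\ Zof Omega M = Z.
Proof.
move=> [M [HM HZ]]; exists M; split; first by split.
move=> M' [HM' HZ'].
have [_ [T1 [T2 [A [H Hs HMi]]]]] := HM.
have [_ [T1' [T2' [A' [H' Hs' HMi']]]]] := HM'.
have HZs : forall Y : {set U}, subtransversal Omega Y ->
    (lin_indep (col_IA T1 A) Y <-> lin_indep (col_IA T1' A') Y).
  move=> Y sY.
  have E : (Y \in Zof Omega M) = (Y \in Zof Omega M') by rewrite HZ HZ'.
  rewrite /Zof !inE sY !andbT in E.
  have := HMi Y; have := HMi' Y; rewrite E; tauto.
have C := core HOmega H Hs H' Hs' HZs.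
apply/setP => X; apply/idP/idP => hX.
- by apply/HMi'; apply/C; apply/HMi.
- by apply/HMi; apply/C; apply/HMi'.
Qed.
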